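(* Let $\alpha:X\to P(A\times X+1)$ be a discrete probabilistic transition system and let $\tilde\alpha^\#=\langle\tilde\alpha^\#_1,\tilde\alpha^\#_*,a\mapsto\tau_a\rangle:DX\to \mathbb I\times\mathbb I\times(DX)^A$ be $$\tilde\alpha^\#_1(u)=\sum_{x\in X}u(x)\sum_{z\in A\times X+1}\alpha(x)(z),\quad \tilde\alpha^\#_*(u)=\sum_{x\in X}u(x)\alpha(x)( * ),\quad \tau_a(u)(y)=\sum_{x\in X}u(x)\alpha(x)(a,y).$$ Then there is a unique map $[\![-]\!]:DX\to\mathcal M(A^\infty)$ such that for all $u\in DX$, $a\in A$: $[\![u]\!](A^\infty)=\tilde\alpha^\#_1(u)$, $[\![u]\!](\{\varepsilon\})=\tilde\alpha^\#_*(u)$, and $[\![u]\!]_a=[\![\tau_a(u)]\!]$ (i.e. $[\![-]\!]$ is an $F$-coalgebra morphism from $\tilde\alpha^\#$ to $\Pi$). Moreover, writing $\langle\!\langle x\rangle\!\rangle=[\![\delta_x]\!]$, for every $u\in DX$, $$[\![u]\!]=\sum_{x\in X}u(x)\,\langle\!\langle x\rangle\!\rangle.$$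
   Context: $X$ is a set, $A$ a finite alphabet, $1=\{*\}$, $\mathbb I=[0,1]$. $PY$ (resp. $DY$) is the set of finitely supported functions $u:Y\to\mathbb I$ with $\sum_y u(y)=1$ (resp. $\le1$). $\delta_x\in DX$ is the point mass at $x$. $A^\infty=A^*\cup A^\omega$ (finite and infinite words, empty word $\varepsilon$) with $\sigma$-algebra generated by $\{\emptyset\}\cup\{\{w\}\mid w\in A^*\}\cup\{wA^\infty\mid w\in A^*\}$, $wS=\{wv\mid v\in S\}$. $\mathcal M(A^\infty)$ is the set of sub-probability measures on $A^\infty$; for $m\in\mathcal M(A^\infty)$ and $a\in A$, $m_a(S)=m(aS)$. The coalgebra $\Pi:\mathcal M(A^\infty)\to\mathbb I\times\mathbb I\times\mathcal M(A^\infty)^A$ is $\Pi(m)=\langle m(A^\infty),m(\{\varepsilon\}),a\mapsto m_a\rangle$. *)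

(* Defs.v *)
From Stdlib Require Import Reals List ClassicalEpsilon.
Open Scope R_scope.
Set Implicit Arguments.

Definition fin_supp (Y : Type) (f : Y -> R) (l : list Y) : Prop :=
  NoDup l /\ forall y, f y <> 0 -> In y l.

(* sum_{y in Y} f y for finitely supported f (0 otherwise; the value does
   not depend on the chosen support list) *)
Definition fsum (Y : Type) (f : Y -> R) : R :=
  match excluded_middle_informative (exists l, fin_supp f l) with
  | left H => fold_right Rplus 0 (map f (proj1_sig (constructive_indefinite_description _ H)))
  | right _ => 0
  end.

Definition isP (Y : Type) (u : Y -> R) : Prop :=
  (forall y, 0 <= u y <= 1) /\ (exists l, fin_supp u l) /\ fsum u = 1.

Definition isD (Y : Type) (u : Y -> R) : Prop :=
  (forall y, 0 <= u y <= 1) /\ (exists l, fin_supp u l) /\ fsum u <= 1.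

Definition dirac (X : Type) (x : X) : X -> R :=
  fun y => if excluded_middle_informative (y = x) then 1 else 0.

Inductive word (A : Type) : Type :=
| Fin : list A -> word A
| Inf : (nat -> A) -> word A.

Definition wcons (A : Type) (a : A) (w : word A) : word A :=
  match w with
  | Fin s => Fin (a :: s)
  | Inf f => Inf (fun n => match n with O => a | S k => f k end)
  end.

Definition wapp (A : Type) (s : list A) (w : word A) : word A :=
  fold_right (@wcons A) w s.

Definition wset (A : Type) := word A -> Prop.

Definition wempty (A : Type) : wset A := fun _ => False.
Definition wfull (A : Type) : wset A := fun _ => True.
Definition wsingle (A : Type) (s : list A) : wset A := fun v => v = Fin s.
Definition wcyl (A : Type) (s : list A) : wset A := fun v => exists v', v = wapp s v'.
Definition wprefix (A : Type) (a : A) (S : wset A) : wset A :=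
  fun v => exists v', S v' /\ v = wcons a v'.
Definition wcompl (A : Type) (S : wset A) : wset A := fun v => ~ S v.
Definition wbigcup (A : Type) (F : nat -> wset A) : wset A := fun v => exists n, F n v.

Inductive measurable (A : Type) : wset A -> Prop :=
| meas_empty : measurable (@wempty A)
| meas_single : forall s, measurable (wsingle s)
| meas_cyl : forall s, measurable (wcyl s)
| meas_compl : forall S, measurable S -> measurable (wcompl S)
| meas_bigcup : forall F : nat -> wset A,
    (forall n, measurable (F n)) -> measurable (wbigcup F).

(* sub-probability measures on A^infty; a measure is represented by a set
   function, only its values on measurable sets matter *)
Definition is_subprob (A : Type) (m : wset A -> R) : Prop :=
  m (@wempty A) = 0 /\
  (forall S, measurable S -> 0 <= m S) /\
  (forall F : nat -> wset A,
      (forall n, measurable (F n)) ->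
      (forall i j v, i <> j -> F i v -> F j v -> False) ->
      infinite_sum (fun n => m (F n)) (m (wbigcup F))) /\
  m (@wfull A) <= 1.

Section Lift.
Variables (A X : Type) (alpha : X -> (A * X + unit) -> R).

Definition alpha1 (u : X -> R) : R := fsum (fun x => u x * fsum (alpha x)).
Definition alphastar (u : X -> R) : R := fsum (fun x => u x * alpha x (inr tt)).
Definition tau (a : A) (u : X -> R) : X -> R :=
  fun y => fsum (fun x => u x * alpha x (inl (a, y))).

Definition is_coalg_morphism (sem : (X -> R) -> wset A -> R) : Prop :=
  forall u, isD u ->
    is_subprob (sem u) /\
    sem u (@wfull A) = alpha1 u /\
    sem u (wsingle nil) = alphastar u /\
    (forall a S, measurable S -> sem u (wprefix a S) = sem (tau a u) S).
End Lift.

(* Main.v *)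
Require Import Defs.
From Stdlib Require Import Reals List.
Open Scope R_scope.
From mathcomp Require all_boot all_algebra all_classical all_reals all_analysis measurable_realfun Rstruct Rstruct_topology ring lra.
Module Leb.
From mathcomp Require Import all_boot all_algebra all_classical all_reals all_analysis measurable_realfun Rstruct Rstruct_topology ring lra.
Import order.Order.TTheory GRing.Theory Num.Theory.
Local Open Scope ring_scope.
Local Open Scope classical_set_scope.
Definition lam (S : R -> Prop) : R := fine (@lebesgue_measure R S).
Definition lmeas (S : R -> Prop) : Prop := measurable (S : set (R : realType)).
Definition bnd (S : R -> Prop) : Prop := exists a b : R, forall w, S w -> (Rle a w /\ Rle w b).

Lemma Ico_set (a b : R) : (fun w => Rle a w /\ Rlt w b) = [set` Interval (BLeft a) (BLeft b)].
Proof.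
apply/funext => w /=; rewrite in_itv /= propeqE; split.
  by move=> [/RleP -> /RltP ->].
by move/andP => [/RleP ? /RltP ?].
Qed.
Lemma Icc_set (a b : R) : (fun w => Rle a w /\ Rle w b) = [set` Interval (BLeft a) (BRight b)].
Proof.
apply/funext => w /=; rewrite in_itv /= propeqE; split.
  by move=> [/RleP -> /RleP ->].
by move/andP => [/RleP ? /RleP ?].
Qed.

Lemma lm_Ico a b : lmeas (fun w => Rle a w /\ Rlt w b).
Proof. rewrite /lmeas Ico_set; exact: measurable_itv. Qed.
Lemma lm_Icc a b : lmeas (fun w => Rle a w /\ Rle w b).
Proof. rewrite /lmeas Icc_set; exact: measurable_itv. Qed.
Lemma lm_and S T : lmeas S -> lmeas T -> lmeas (fun w => S w /\ T w).
Proof. by move=> hS hT; exact: measurableI. Qed.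
Lemma lm_or S T : lmeas S -> lmeas T -> lmeas (fun w => S w \/ T w).
Proof. by move=> hS hT; exact: measurableU. Qed.
Lemma lm_not S : lmeas S -> lmeas (fun w => ~ S w).
Proof. by move=> hS; exact: measurableC. Qed.
Lemma lm_false : lmeas (fun _ => False).
Proof. exact: measurable0. Qed.
Lemma lm_union (F : nat -> R -> Prop) : (forall n, lmeas (F n)) -> lmeas (fun w => exists n, F n w).
Proof.
move=> hF; have -> : (fun w => exists n, F n w) = \bigcup_n (F n : set R).
  by apply/funext => w; apply/propext; split => [[n Hn]|[n _ Hn]]; exists n.
exact: bigcupT_measurable.
Qed.

Lemma lm_affine S p c : lmeas S -> Rlt 0 p -> lmeas (fun w => S (Rdiv (Rminus w c) p)).
Proof.
move=> hS hp.
have mf : measurable_fun (setT : set (R : realType)) (fun w : (R : realType) => (w - c) / p : (R : realType)).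
  apply: continuous_measurable_fun => w.
  apply: cvgM; last exact: cvg_cst.
  by apply: cvgB; [exact: cvg_id| exact: cvg_cst].
have := mf measurableT S hS; rewrite setTI.
by [].
Qed.

Lemma lam_Ico a b : Rle a b -> lam (fun w => Rle a w /\ Rlt w b) = Rminus b a.
Proof.
move=> /RleP hab; rewrite /lam Ico_set lebesgue_measure_itv /= lte_fin.
case: ifPn => // hba; have -> : a = b by apply/le_anti; rewrite hab leNgt hba.
by rewrite RminusE subrr.
Qed.

Lemma lam_ge0 S : Rle 0 (lam S).
Proof. apply/RleP; rewrite /lam; apply: fine_ge0; exact: measure_ge0. Qed.

Lemma lam_false : lam (fun _ => False) = 0.
Proof. by rewrite /lam (_ : (fun _ => False) = set0) ?measure0. Qed.

Lemma leb_fin S : lmeas S -> bnd S -> (@lebesgue_measure R S) = (lam S)%:E.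
Proof.
move=> hS [a [b hab]]; rewrite /lam fineK //.
rewrite ge0_fin_numE; last exact: measure_ge0.
apply: (@le_lt_trans _ _ (@lebesgue_measure R [set` Interval (BLeft a) (BRight b)])).
  apply: le_measure.
  - by rewrite inE.
  - by rewrite inE; exact: measurable_itv.
  - by rewrite -Icc_set => w /hab.
by rewrite lebesgue_measure_itv; case: ifP => _; rewrite ltry.
Qed.


Lemma bnd_or S T : bnd S -> bnd T -> bnd (fun w => S w \/ T w).
Proof.
intros [a [b H]] [a' [b' H']]. exists (Rmin a a'), (Rmax b b').
intros w [h|h]; [destruct (H w h) as [h1 h2]|destruct (H' w h) as [h1 h2]]; split.
- eapply Rle_trans; [apply Rmin_l|exact h1].
- eapply Rle_trans; [exact h2|apply Rmax_l].
- eapply Rle_trans; [apply Rmin_r|exact h1].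
- eapply Rle_trans; [exact h2|apply Rmax_r].
Qed.

Lemma lam_union2 S T : lmeas S -> lmeas T -> bnd S -> bnd T ->
  (forall w, S w -> T w -> False) -> lam (fun w => S w \/ T w) = Rplus (lam S) (lam T).
Proof.
move=> hS hT bS bT dST.
apply: EFin_inj; rewrite -leb_fin; [| exact: lm_or| exact: bnd_or].
rewrite RplusE EFinD -!leb_fin //.
rewrite (_ : (fun w => S w \/ T w) = (S `|` T)) //.
rewrite measureU //.
by apply/seteqP; split => w //= [hs ht]; case: (dST w hs ht).
Qed.

Lemma lam_sigma (F : nat -> R -> Prop) : (forall n, lmeas (F n)) ->
  (exists a b, forall n w, F n w -> Rle a w /\ Rle w b) ->
  (forall i j w, i <> j -> F i w -> F j w -> False) ->
  infinite_sum (fun n => lam (F n)) (lam (fun w => exists n, F n w)).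
Proof.
move=> hF [a [b hab]] dF.
have bF n : bnd (F n) by exists a, b => w; exact: hab.
have mU : lmeas (fun w => exists n, F n w) by exact: lm_union.
have bU : bnd (fun w => exists n, F n w) by exists a, b => w [n hn]; exact: (hab n).
have tF : trivIset setT (F : nat -> set R).
  move=> i j _ _ [w [hi hj]]; apply: contrapT => nij.
  exact: (dF i j w nij hi hj).
have H1 : (fun n => \sum_(0 <= i < n) (lam (F i))%:E) @ \oo --> (lam (fun w => exists n, F n w))%:E.
  have E1 : (fun n => \sum_(0 <= i < n) (lam (F i))%:E) = (fun n => \sum_(0 <= i < n) @lebesgue_measure R (F i)).
    by apply/funext => n; apply: eq_bigr => i _; rewrite leb_fin.
  rewrite E1 -leb_fin //.
  have -> : (fun w => exists n, F n w) = \bigcup_n (F n : set R).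
    by apply/funext => w; apply/propext; split => [[n Hn]|[n _ Hn]]; exists n.
  exact: (@measure_sigma_additive _ _ _ (@lebesgue_measure R) (F : nat -> set R) hF tF).
move: H1; under eq_fun do rewrite sumEFin.
move/fine_cvgP => [_]; rewrite /comp /=.
move=> H2 eps /RltP heps.
have [N _ HN] := (proj1 (@cvgrPdist_lt _ (R : realType) _ _ _ _ _) H2) eps heps.
exists N => n /ssrnat.leP hn.
rewrite /R_dist sum_f_R0E RabsE distrC; apply/RltP; apply: HN => /=.
by apply: leqW.
Qed.

Lemma leb_affine (B : R -> Prop) (p c : R) : lmeas B -> Rlt 0 p ->
  @lebesgue_measure R B = ((p^-1)%:E * @lebesgue_measure R (fun w => B (Rdiv (Rminus w c) p)))%E.
Proof.
move=> hB /RltP hp.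
have hp' : 0 <= p^-1 by rewrite invr_ge0 ltW.
pose h := (fun w : (R : realType) => ((w - c) / p)%R : (R : realType)).
have mf0 : measurable_fun (setT : set (R : realType)) h.
  apply: continuous_measurable_fun => w.
  apply: cvgM; last exact: cvg_cst.
  by apply: cvgB; [exact: cvg_id| exact: cvg_cst].
pose h' := (h : measurableTypeR R -> measurableTypeR R).
have mf : measurable_fun (setT : set (measurableTypeR R)) h' by exact: mf0.
have := (@lebesgue_measure_unique R (mscale (NngNum hp') (pushforward (@lebesgue_measure R) h'))).
move=> /(_ mf) H; rewrite H; last exact: hB.
  by rewrite /mscale /pushforward.
move=> _ [[x y] _ <-] /=.
rewrite [RHS](_ : _ = ((p^-1)%:E * @lebesgue_measure R (h' @^-1` `]x, y]))%E) //.
have -> : h' @^-1` `]x, y] = `]p * x + c, p * y + c]%classic.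
  apply/seteqP; split => w /=; have hw : w = p * h' w + c.
    - by rewrite /h' /h mulrC divfK ?subrK // gt_eqF.
    - rewrite !in_itv /= => /andP [h1 h2]; apply/andP; split.
      + by rewrite hw ltrD2r ltr_pM2l.
      + by rewrite hw lerD2r ler_pM2l.
    - by rewrite /h' /h mulrC divfK ?subrK // gt_eqF.
    - rewrite !in_itv /= => /andP [h1 h2]; apply/andP; split.
      + by rewrite -(ltr_pM2l hp) -(ltrD2r c) -hw.
      + by rewrite -(ler_pM2l hp) -(lerD2r c) -hw.
rewrite !lebesgue_measure_itv /= !lte_fin ltrD2r ltr_pM2l //.
case: ifPn => _; last by rewrite mule0.
rewrite -!EFinB -EFinM; congr (_%:E).
rewrite opprD addrACA subrr addr0 -mulrBr mulKf //.
by rewrite gt_eqF.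
Qed.


Lemma bnd_affine S p c : bnd S -> Rlt 0 p -> bnd (fun w => S (Rdiv (Rminus w c) p)).
Proof.
move=> [a [b hab]] /RltP hp; exists (p * a + c), (p * b + c) => w /hab [/RleP h1 /RleP h2].
have hw : w = p * ((w - c) / p) + c by rewrite mulrC divfK ?subrK // gt_eqF.
split; apply/RleP.
- by rewrite [X in _ <= X]hw lerD2r ler_pM2l.
- by rewrite [X in X <= _]hw lerD2r ler_pM2l.
Qed.

Lemma lam_affine S p c : lmeas S -> bnd S -> Rlt 0 p ->
  lam (fun w => S (Rdiv (Rminus w c) p)) = Rmult p (lam S).
Proof.
move=> hS bS hp.
have := leb_affine _ _ c hS hp.
rewrite !leb_fin //; [|exact: lm_affine|exact: bnd_affine].
move=> H.
have H2 : lam S = p^-1 * lam (fun w => S (Rdiv (Rminus w c) p)).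
  by apply: EFin_inj; rewrite H EFinM.
move/RltP: hp => hp.
by rewrite RmultE H2 mulrA divff ?mul1r // gt_eqF.
Qed.

Lemma pi_lambda (T : Type) (G H : (T -> Prop) -> Prop) :
  (forall A B, G A -> G B -> G (fun t => A t /\ B t)) ->
  H (fun _ => True) ->
  (forall A, H A -> H (fun t => ~ A t)) ->
  (forall F : nat -> T -> Prop, (forall i j t, i <> j -> F i t -> F j t -> False) ->
     (forall n, H (F n)) -> H (fun t => exists n, F n t)) ->
  (forall A, G A -> H A) ->
  forall S, (forall P : (T -> Prop) -> Prop, (forall A, G A -> P A) ->
     (forall A, P A -> P (fun t => ~ A t)) ->
     (forall F : nat -> T -> Prop, (forall n, P (F n)) -> P (fun t => exists n, F n t)) -> P S) ->
  H S.
Proof.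
move=> GI HT HC HU GH S hS.
have sub : <<s setT, (G : set (set T)) >> `<=` (H : set (set T)).
  apply: lambda_system_subset => //.
  apply/dynkin_lambda_system; split.
  - exact: HT.
  - by move=> A /HC.
  - move=> F tF hF.
    have -> : \bigcup_k F k = (fun t => exists n, F n t).
      by apply/funext => w; apply/propext; split => [[n _ Hn]|[n Hn]]; exists n.
    apply: HU => // i j t nij hi hj; apply: nij.
    by apply: (tF i j) => //; exists t.
apply: sub; apply: hS.
- by move=> A GA; exact: sub_sigma_algebra.
- move=> A hA; have := sigma_algebraCD hA.
  by rewrite setTD.
- move=> F hF.
  have -> : (fun t => exists n, F n t) = \bigcup_k F k.
    by apply/funext => w; apply/propext; split => [[n Hn]|[n _ Hn]]; exists n.
  exact: sigma_algebra_bigcup.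
Qed.

End Leb.

From Stdlib Require Import Reals List Lra Lia Permutation ClassicalEpsilon FunctionalExtensionality PropExtensionality Classical.
Import ListNotations.
Open Scope R_scope.

Definition lsum {Y : Type} (l : list Y) (f : Y -> R) : R := fold_right Rplus 0 (map f l).

Lemma lsum_nil {Y} (f : Y -> R) : lsum nil f = 0.
Proof. reflexivity. Qed.
Lemma lsum_cons {Y} (y : Y) l f : lsum (y :: l) f = f y + lsum l f.
Proof. reflexivity. Qed.

Lemma lsum_app {Y} (l1 l2 : list Y) f : lsum (l1 ++ l2) f = lsum l1 f + lsum l2 f.
Proof. induction l1; simpl; [rewrite lsum_nil; ring| rewrite !lsum_cons, IHl1; ring]. Qed.

Lemma lsum_perm {Y} (l1 l2 : list Y) f : Permutation l1 l2 -> lsum l1 f = lsum l2 f.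
Proof.
  intro H; induction H; unfold lsum in *; simpl in *; try lra.
Qed.

Lemma lsum_ext {Y} (l : list Y) f g : (forall y, In y l -> f y = g y) -> lsum l f = lsum l g.
Proof.
  induction l; intro H; [reflexivity|].
  rewrite !lsum_cons, H by (left; auto). rewrite IHl; auto. intros; apply H; right; auto.
Qed.

Lemma lsum_plus {Y} (l : list Y) f g : lsum l (fun y => f y + g y) = lsum l f + lsum l g.
Proof. induction l; [unfold lsum; simpl; ring| rewrite !lsum_cons, IHl; ring]. Qed.

Lemma lsum_scal {Y} (l : list Y) c f : lsum l (fun y => c * f y) = c * lsum l f.
Proof. induction l; [unfold lsum; simpl; ring| rewrite !lsum_cons, IHl; ring]. Qed.

Lemma lsum_zero {Y} (l : list Y) f : (forall y, In y l -> f y = 0) -> lsum l f = 0.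
Proof. intro H; rewrite (lsum_ext l f (fun _ => 0)) by auto. induction l; [reflexivity| rewrite lsum_cons, IHl by (intros; apply H; right; auto); ring]. Qed.

Lemma lsum_le {Y} (l : list Y) f g : (forall y, In y l -> f y <= g y) -> lsum l f <= lsum l g.
Proof.
  induction l; intro H; [unfold lsum; simpl; lra|].
  rewrite !lsum_cons. assert (f a <= g a) by (apply H; left; auto).
  assert (lsum l f <= lsum l g) by (apply IHl; intros; apply H; right; auto). lra.
Qed.

Lemma lsum_nonneg {Y} (l : list Y) f : (forall y, In y l -> 0 <= f y) -> 0 <= lsum l f.
Proof. intro H; rewrite <- (lsum_zero l (fun _ => 0)) by auto. apply lsum_le; auto. Qed.

Lemma lsum_nz {Y} (l : list Y) f : lsum l f <> 0 -> exists y, In y l /\ f y <> 0.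
Proof.
  induction l; intro H; [unfold lsum in H; simpl in H; lra|].
  rewrite lsum_cons in H. destruct (Req_dec (f a) 0) as [Ha|Ha].
  - destruct IHl as [y [Hy1 Hy2]]; [lra|]. exists y; split; [right|]; auto.
  - exists a; split; [left|]; auto.
Qed.

Lemma lsum_swap {Y Z} (l1 : list Y) (l2 : list Z) (g : Y -> Z -> R) :
  lsum l1 (fun y => lsum l2 (g y)) = lsum l2 (fun z => lsum l1 (fun y => g y z)).
Proof.
  induction l1.
  - rewrite lsum_nil. symmetry; apply lsum_zero; intros; reflexivity.
  - rewrite lsum_cons, IHl1. rewrite <- lsum_plus. apply lsum_ext; intros; rewrite lsum_cons; reflexivity.
Qed.

Definition nzb {Y} (f : Y -> R) (y : Y) : bool := if Req_EM_T (f y) 0 then false else true.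

Lemma lsum_filter {Y} (l : list Y) f : lsum l f = lsum (filter (nzb f) l) f.
Proof.
  induction l; [reflexivity|]. simpl. unfold nzb at 1. destruct (Req_EM_T (f a) 0) as [H|H].
  - rewrite lsum_cons, H, IHl; ring.
  - rewrite !lsum_cons, IHl; reflexivity.
Qed.

Lemma fsum_eq {Y} (f : Y -> R) l : fin_supp f l -> fsum f = lsum l f.
Proof.
  intro Hl. unfold fsum. destruct (excluded_middle_informative _) as [H|H]; [|exfalso; apply H; exists l; auto].
  destruct (constructive_indefinite_description _ H) as [l' Hl']. simpl.
  change (lsum l' f = lsum l f).
  rewrite (lsum_filter l'), (lsum_filter l). apply lsum_perm.
  destruct Hl as [N1 S1], Hl' as [N2 S2].
  apply NoDup_Permutation; try (apply NoDup_filter; auto).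
  intro y; rewrite !filter_In; unfold nzb; destruct (Req_EM_T (f y) 0) as [E|E]; split; intros [h1 h2]; try discriminate; split; auto.
Qed.

Lemma fin_supp_nodup {Y} (f : Y -> R) l : (forall y, f y <> 0 -> In y l) ->
  exists l', fin_supp f l' /\ (forall y, In y l' <-> In y l).
Proof.
  intro H. assert (dec : forall x y : Y, {x = y} + {x <> y}) by (intros; apply excluded_middle_informative).
  exists (nodup dec l). split; [split; [apply NoDup_nodup| intros; apply nodup_In; auto]|].
  intro y; apply nodup_In.
Qed.

Lemma wapp_nil {A} (v : word A) : wapp nil v = v.
Proof. reflexivity. Qed.
Lemma wapp_cons {A} a s (v : word A) : wapp (a :: s) v = wcons a (wapp s v).
Proof. reflexivity. Qed.
Lemma wapp_app {A} (s r : list A) v : wapp (s ++ r) v = wapp s (wapp r v).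
Proof. unfold wapp; apply fold_right_app. Qed.
Lemma wapp_fin {A} (s r : list A) : wapp s (Fin r) = Fin (s ++ r).
Proof. induction s; simpl; [reflexivity|]. change (wcons a (wapp s (Fin r)) = Fin (a :: s ++ r)). rewrite IHs; reflexivity. Qed.

Lemma wcons_inj {A} (a b : A) v w : wcons a v = wcons b w -> a = b /\ v = w.
Proof.
  destruct v as [s|f], w as [t|g]; simpl; intro H; try discriminate.
  - injection H; intros; subst; auto.
  - injection H; intro Hf.
    split; [exact (f_equal (fun h => h 0%nat) Hf)|].
    f_equal; apply functional_extensionality; intro n.
    exact (f_equal (fun h => h (S n)) Hf).
Qed.

Lemma wcons_fin {A} (a : A) v t : wcons a v = Fin t -> exists t', v = Fin t' /\ t = a :: t'.
Proof. destruct v; simpl; intro H; try discriminate. injection H; intros; subst; eauto. Qed.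

Lemma wapp_Fin {A} (s : list A) v t : wapp s v = Fin t -> exists r, v = Fin r /\ t = s ++ r.
Proof.
  revert t; induction s; intros t H; simpl in *.
  - exists t; auto.
  - apply wcons_fin in H. destruct H as [t' [H1 H2]]. destruct (IHs _ H1) as [r [Hr1 Hr2]].
    exists r; subst; auto.
Qed.

Lemma wapp_eq {A} (s t : list A) v w : wapp s v = wapp t w ->
  (exists r, t = s ++ r /\ v = wapp r w) \/ (exists r, s = t ++ r /\ w = wapp r v).
Proof.
  revert t; induction s as [|a s IH]; intros t H.
  - left; exists t; auto.
  - destruct t as [|b t].
    + right; exists (a :: s); auto.
    + rewrite !wapp_cons in H. apply wcons_inj in H. destruct H as [E H]; subst b.
      destruct (IH t H) as [[r [H1 H2]]|[r [H1 H2]]]; [left|right]; exists r; subst; auto.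
Qed.

Fixpoint pick {Z : Type} (l : list Z) (w : Z -> R) (om : R) : option (Z * R) :=
  match l with
  | nil => None
  | z :: l' => if Rlt_dec om (w z) then Some (z, om / w z) else pick l' w (om - w z)
  end.

Lemma pick_in {Z} (l : list Z) w om z r : pick l w om = Some (z, r) -> In z l.
Proof.
  revert om; induction l; intros om H; simpl in H; [discriminate|].
  destruct (Rlt_dec om (w a)); [injection H; intros; subst; left; auto| right; eauto].
Qed.

Lemma pick_r {Z} (l : list Z) w om z r : (forall z, 0 <= w z) -> 0 <= om ->
  pick l w om = Some (z, r) -> 0 <= r < 1.
Proof.
  intro Hw; revert om; induction l; intros om Hom H; simpl in H; [discriminate|].
  destruct (Rlt_dec om (w a)).
  - injection H; intros; subst. assert (0 < w z) by lra. split.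
    + apply Rmult_le_pos; [lra| left; apply Rinv_0_lt_compat; lra].
    + apply Rmult_lt_reg_r with (w z); [lra|]. unfold Rdiv; rewrite Rmult_assoc, Rinv_l; lra.
  - eapply IHl; [|exact H]. lra.
Qed.

Lemma pick_lt {Z} (l : list Z) w om z r : (forall z, 0 <= w z) ->
  pick l w om = Some (z, r) -> om < lsum l w.
Proof.
  intro Hw; revert om; induction l; intros om H; simpl in H; [discriminate|].
  rewrite lsum_cons. destruct (Rlt_dec om (w a)).
  - assert (0 <= lsum l w) by (apply lsum_nonneg; auto). lra.
  - specialize (IHl _ H). lra.
Qed.

Lemma pick_some {Z} (l : list Z) w om : 0 <= om < lsum l w ->
  exists z r, pick l w om = Some (z, r).
Proof.
  revert om; induction l; intros om H; [rewrite lsum_nil in H; lra|].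
  rewrite lsum_cons in H. simpl. destruct (Rlt_dec om (w a)); [eauto|].
  apply IHl; lra.
Qed.

Section Proc.
Variables (A X : Type) (alpha : X -> (A * X + unit) -> R).
Hypothesis Halpha : forall x, isP (alpha x).

Definition lst (x : X) : list (A * X + unit) :=
  proj1_sig (constructive_indefinite_description _ (proj1 (proj2 (Halpha x)))).

Lemma lst_supp x : fin_supp (alpha x) (lst x).
Proof. unfold lst. destruct (constructive_indefinite_description _ _); auto. Qed.

Lemma alpha_ge0 x z : 0 <= alpha x z.
Proof. apply (proj1 (Halpha x)). Qed.
Lemma alpha_le1 x z : alpha x z <= 1.
Proof. apply (proj1 (Halpha x)). Qed.

Lemma lsum_alpha x : lsum (lst x) (alpha x) = 1.
Proof. rewrite <- (fsum_eq _ _ (lst_supp x)). apply (proj2 (proj2 (Halpha x))). Qed.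

Definition step (x : X) (om : R) := pick (lst x) (alpha x) om.

Fixpoint letter (n : nat) (x : X) (om : R) : option A :=
  match step x om with
  | Some (inl (a, y), r) => match n with O => Some a | S k => letter k y r end
  | _ => None
  end.

Fixpoint letters (n : nat) (x : X) (om : R) : list A :=
  match n with
  | O => nil
  | S k => match step x om with
           | Some (inl (a, y), r) => a :: letters k y r
           | _ => nil
           end
  end.

Definition getA (o : option A) : o <> None -> A :=
  match o as o0 return o0 <> None -> A with
  | Some a => fun _ => a
  | None => fun H => False_rect _ (H eq_refl)
  end.

Lemma getA_ext o1 o2 p1 p2 : o1 = o2 -> getA o1 p1 = getA o2 p2.
Proof. intro E; subst. destruct o2; [reflexivity| exfalso; apply p1; reflexivity]. Qed.

Lemma notex_letter x om : ~ (exists n, letter n x om = None) -> forall n, letter n x om <> None.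
Proof. intros H n E; apply H; eauto. Qed.

Definition F (x : X) (om : R) : word A :=
  match excluded_middle_informative (exists n, letter n x om = None) with
  | left H => Fin (letters (proj1_sig (constructive_indefinite_description _ H)) x om)
  | right H => Inf (fun n => getA (letter n x om) (notex_letter x om H n))
  end.

Lemma letters_stable n m x om : letter n x om = None -> letter m x om = None ->
  letters n x om = letters m x om.
Proof.
  revert m x om; induction n; intros m x om Hn Hm.
  - simpl in Hn. destruct m; [reflexivity|]. simpl.
    destruct (step x om) as [[[[a y]|u] r]|]; try discriminate; reflexivity.
  - simpl in Hn. destruct m.
    + simpl in Hm. simpl. destruct (step x om) as [[[[a y]|u] r]|]; try discriminate; reflexivity.
    + simpl in Hm |- *. destruct (step x om) as [[[[a y]|u] r]|]; try reflexivity.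
      f_equal; apply IHn; auto.
Qed.

Lemma F_step x om : F x om =
  match step x om with
  | Some (inl (a, y), r) => wcons a (F y r)
  | _ => Fin nil
  end.
Proof.
  destruct (step x om) as [[[[a y]|u] r]|] eqn:Hs.
  - assert (HL : forall k, letter (S k) x om = letter k y r) by (intro k; simpl; rewrite Hs; reflexivity).
    assert (HL0 : letter 0 x om = Some a) by (simpl; rewrite Hs; reflexivity).
    unfold F at 1. destruct (excluded_middle_informative (exists n, letter n x om = None)) as [H|H].
    + destruct (constructive_indefinite_description _ H) as [n Hn]; cbn [proj1_sig].
      destruct n as [|n]; [congruence|]. rewrite HL in Hn.
      unfold F. destruct (excluded_middle_informative (exists n, letter n y r = None)) as [H'|H'];
        [|exfalso; apply H'; eauto].
      destruct (constructive_indefinite_description _ H') as [m Hm]; cbn [proj1_sig].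
      cbn [letters wcons]. rewrite Hs. do 2 f_equal. apply letters_stable; auto.
    + unfold F. destruct (excluded_middle_informative (exists n, letter n y r = None)) as [H'|H'].
      * exfalso; apply H. destruct H' as [k Hk]. exists (S k). rewrite HL; auto.
      * cbn [wcons]. f_equal. apply functional_extensionality; intro n. destruct n as [|k].
        -- assert (hne : Some a <> None) by discriminate.
           transitivity (getA (Some a) hne); [apply getA_ext; exact HL0| reflexivity].
        -- apply getA_ext. apply HL.
  - unfold F. destruct (excluded_middle_informative _) as [H|H].
    + destruct (constructive_indefinite_description _ H) as [n Hn]; cbn [proj1_sig].
      destruct n; cbn [letters]; [reflexivity| rewrite Hs; reflexivity].
    + exfalso; apply H; exists 0%nat; cbn [letter]; rewrite Hs; reflexivity.
  - unfold F. destruct (excluded_middle_informative _) as [H|H].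
    + destruct (constructive_indefinite_description _ H) as [n Hn]; cbn [proj1_sig].
      destruct n; cbn [letters]; [reflexivity| rewrite Hs; reflexivity].
    + exfalso; apply H; exists 0%nat; cbn [letter]; rewrite Hs; reflexivity.
Qed.



Notation lam := Leb.lam.
Notation lmeas := Leb.lmeas.
Notation bnd := Leb.bnd.
Lemma lam_false' : lam (fun _ => False) = 0.
Proof. exact Leb.lam_false. Qed.
Lemma lam_ge0' S : 0 <= lam S.
Proof. exact (Leb.lam_ge0 S). Qed.

Lemma set_ext (S T : R -> Prop) : (forall w, S w <-> T w) -> S = T.
Proof. intro H; apply functional_extensionality; intro w; apply propositional_extensionality; auto. Qed.

Lemma lmeas_ext S T : (forall w, S w <-> T w) -> lmeas S -> lmeas T.
Proof. intros H; rewrite (set_ext S T H); auto. Qed.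
Lemma lam_ext S T : (forall w, S w <-> T w) -> lam S = lam T.
Proof. intros H; rewrite (set_ext S T H); auto. Qed.
Lemma bnd_ext S T : (forall w, S w <-> T w) -> bnd S -> bnd T.
Proof. intros H; rewrite (set_ext S T H); auto. Qed.

Definition Q {Z} (l : list Z) (w : Z -> R) (G : Z -> R -> Prop) : R -> Prop :=
  fun om => 0 <= om /\ match pick l w om with Some (z, r) => G z r | None => False end.

Lemma Q_bnd {Z} (l : list Z) w G : (forall z, 0 <= w z) -> forall om, Q l w G om -> 0 <= om <= lsum l w.
Proof.
  intros Hw om [H0 H]. destruct (pick l w om) as [[z r]|] eqn:E; [|contradiction].
  apply pick_lt in E; auto. lra.
Qed.

Lemma Q_props {Z} (l : list Z) w G : (forall z, 0 <= w z) -> (forall z, lmeas (G z)) ->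
  (forall z r, G z r -> 0 <= r < 1) ->
  lmeas (Q l w G) /\ lam (Q l w G) = lsum l (fun z => w z * lam (G z)).
Proof.
  intros Hw HG HG01.
  assert (bG : forall z, bnd (G z)) by (intro z; exists 0, 1; intros r Hr; apply HG01 in Hr; lra).
  induction l as [|z l IH].
  - assert (E : forall om, Q [] w G om <-> False) by (intro om; unfold Q; simpl; tauto).
    split; [eapply lmeas_ext; [intro om; symmetry; apply E| apply Leb.lm_false]|].
    rewrite lsum_nil, (lam_ext _ _ E). apply lam_false'.
  - destruct IH as [IHm IHl].
    set (S1 := fun om => 0 <= om /\ om < w z /\ G z (om / w z)).
    set (S2 := fun om => w z <= om /\ Q l w G (om - w z)).
    assert (E : forall om, Q (z :: l) w G om <-> S1 om \/ S2 om).
    { intro om; unfold Q, S1, S2; simpl. destruct (Rlt_dec om (w z)) as [h|h].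
      - split; [intros [h1 h2]; left; auto| intros [[h1 [h2 h3]]|[h1 [h2 h3]]]; [auto|lra]].
      - split; [intros [h1 h2]; right; repeat split; auto; lra|].
        intros [[h1 [h2 h3]]|[h1 [h2 h3]]]; [lra| split; [pose proof (Hw z); lra| exact h3]]. }
    assert (bS2 : bnd S2).
    { exists (w z), (w z + lsum l w). intros om [h1 h2]. apply Q_bnd in h2; auto. lra. }
    assert (E2 : forall om, Q l w G ((om - w z) / 1) <-> S2 om).
    { intro om. unfold Rdiv; rewrite Rinv_1, Rmult_1_r. unfold S2; split; [|tauto].
      intro h; split; auto. apply Q_bnd in h; auto. lra. }
    assert (bQ : bnd (Q l w G)) by (exists 0, (lsum l w); intros om h; apply Q_bnd in h; auto).
    assert (mS2 : lmeas S2) by (eapply lmeas_ext; [exact E2| apply Leb.lm_affine; auto; lra]).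
    assert (lS2 : lam S2 = lam (Q l w G)).
    { rewrite <- (lam_ext _ _ E2). rewrite Leb.lam_affine; auto; lra. }
    assert (H1 : lmeas S1 /\ bnd S1 /\ lam S1 = w z * lam (G z)).
    { destruct (Rle_lt_or_eq_dec 0 (w z) (Hw z)) as [hp|hp].
      - assert (E1 : forall om, G z ((om - 0) / w z) <-> S1 om).
        { intro om. rewrite Rminus_0_r. unfold S1; split; [|tauto].
          intro h; pose proof (HG01 _ _ h) as [h1 h2]. split; [|split; auto].
          + apply Rmult_le_reg_r with (/ w z); [apply Rinv_0_lt_compat; lra| rewrite Rmult_0_l; exact h1].
          + apply Rmult_lt_reg_r with (/ w z); [apply Rinv_0_lt_compat; lra|].
            rewrite Rinv_r by lra. exact h2. }
        split; [eapply lmeas_ext; [exact E1| apply Leb.lm_affine; auto]|].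
        split; [eapply bnd_ext; [exact E1| apply Leb.bnd_affine; auto]|].
        rewrite <- (lam_ext _ _ E1). apply Leb.lam_affine; auto.
      - assert (E1 : forall om, False <-> S1 om) by (intro om; unfold S1; split; [tauto| lra]).
        split; [eapply lmeas_ext; [exact E1| apply Leb.lm_false]|].
        split; [exists 0, 0; intros om h; unfold S1 in h; lra|].
        rewrite <- (lam_ext _ _ E1), <- hp. rewrite lam_false'; ring. }
    destruct H1 as [mS1 [bS1 lS1]].
    split.
    + eapply lmeas_ext; [intro om; symmetry; apply E| apply Leb.lm_or; auto].
    + rewrite (lam_ext _ _ E). rewrite Leb.lam_union2; auto.
      * rewrite lS1, lS2, IHl, lsum_cons; reflexivity.
      * intros om [h1 [h2 h3]] [h4 h5]. lra.
Qed.

Lemma step_some x om : 0 <= om < 1 -> exists z r, step x om = Some (z, r).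
Proof. intro h; apply pick_some; rewrite lsum_alpha; auto. Qed.
Lemma step_r x om z r : 0 <= om -> step x om = Some (z, r) -> 0 <= r < 1.
Proof. intros h H; eapply pick_r; eauto; apply alpha_ge0. Qed.
Lemma step_lt x om z r : step x om = Some (z, r) -> om < 1.
Proof. intro H; rewrite <- (lsum_alpha x); eapply pick_lt; eauto; apply alpha_ge0. Qed.
Lemma step_in x om z r : step x om = Some (z, r) -> In z (lst x).
Proof. apply pick_in. Qed.

Lemma wcons_nil (a : A) v : wcons a v <> Fin nil.
Proof. intro H; apply wcons_fin in H; destruct H as [t [_ H]]; discriminate. Qed.

Definition P (x : X) (S : wset A) : R -> Prop := fun om => 0 <= om < 1 /\ S (F x om).
Definition nu (x : X) (S : wset A) : R := lam (P x S).

Lemma P_bnd x S : bnd (P x S).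
Proof. exists 0, 1; intros om [h _]; lra. Qed.

Lemma nu_ext x S T : (forall v, S v <-> T v) -> nu x S = nu x T.
Proof. intro H; apply lam_ext; intro om; unfold P; rewrite H; tauto. Qed.
Lemma Pmeas_ext x S T : (forall v, S v <-> T v) -> lmeas (P x S) -> lmeas (P x T).
Proof. intro H; apply lmeas_ext; intro om; unfold P; rewrite H; tauto. Qed.

Definition Gp (a : A) (S : wset A) (z : A * X + unit) (r : R) : Prop :=
  0 <= r < 1 /\ match z with inl (a', y) => a' = a /\ S (F y r) | inr _ => False end.

Lemma P_prefix_eq x a S om : P x (wprefix a S) om <-> Q (lst x) (alpha x) (Gp a S) om.
Proof.
  unfold P, Q, Gp, wprefix. change (pick (lst x) (alpha x) om) with (step x om). split.
  - intros [[h0 h1] [v' [hS hv]]]. rewrite F_step in hv.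
    destruct (step_some x om (conj h0 h1)) as [z [r Hs]]. rewrite Hs in hv |- *.
    split; auto. split; [eapply step_r; eauto|].
    destruct z as [[a' y]|u].
    + apply wcons_inj in hv; destruct hv; subst; auto.
    + symmetry in hv; apply wcons_nil in hv; contradiction.
  - intros [h0 h]. destruct (step x om) as [[z r]|] eqn:Hs; [|contradiction].
    destruct h as [hr h]. split; [split; auto; eapply step_lt; eauto|].
    rewrite F_step, Hs. destruct z as [[a' y]|u]; [|contradiction].
    destruct h as [E h]; subst. eauto.
Qed.

Definition extract (a : A) (l : list (A * X + unit)) : list X :=
  flat_map (fun z => match z with
                     | inl (a', y) => if excluded_middle_informative (a' = a) then [y] else []
                     | inr _ => [] end) l.

Lemma extract_In a l y : In y (extract a l) <-> In (inl (a, y)) l.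
Proof.
  unfold extract; rewrite in_flat_map. split.
  - intros [z [hz hy]]. destruct z as [[a' y']|u]; [|contradiction].
    destruct (excluded_middle_informative (a' = a)); [|contradiction].
    destruct hy as [hy|[]]; subst; auto.
  - intro h; exists (inl (a, y)); split; auto.
    destruct (excluded_middle_informative (a = a)); [left; auto| congruence].
Qed.

Lemma extract_NoDup a l : NoDup l -> NoDup (extract a l).
Proof.
  induction l as [|z l IH]; intro H; [constructor|].
  inversion H; subst. change (extract a (z :: l)) with
    ((match z with
      | inl (a', y) => if excluded_middle_informative (a' = a) then [y] else []
      | inr _ => [] end) ++ extract a l).
  destruct z as [[a' y]|u]; [|apply IH; auto].
  destruct (excluded_middle_informative (a' = a)); [|apply IH; auto].
  subst. simpl. constructor; [|apply IH; auto].
  rewrite extract_In; auto.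
Qed.

Lemma lsum_extract a l (g : X -> R) :
  lsum l (fun z => match z with
                   | inl (a', y) => if excluded_middle_informative (a' = a) then g y else 0
                   | inr _ => 0 end) = lsum (extract a l) g.
Proof.
  induction l as [|z l IH]; [reflexivity|].
  rewrite lsum_cons, IH. unfold extract; simpl flat_map. fold (extract a l).
  destruct z as [[a' y]|u]; [|simpl; ring].
  destruct (excluded_middle_informative (a' = a)); [simpl; rewrite lsum_cons; reflexivity| simpl; ring].
Qed.

Lemma extract_supp x a (g : X -> R) : (forall y, g y <> 0 -> alpha x (inl (a, y)) <> 0) ->
  fin_supp g (extract a (lst x)).
Proof.
  intro H. destruct (lst_supp x) as [N S]. split; [apply extract_NoDup; auto|].
  intros y hy; apply extract_In; apply S; auto.
Qed.

Lemma nu_prefix x a S : (forall y, lmeas (P y S)) ->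
  lmeas (P x (wprefix a S)) /\ nu x (wprefix a S) = fsum (fun y => alpha x (inl (a, y)) * nu y S).
Proof.
  intro HS.
  assert (HG : forall z, lmeas (Gp a S z) /\
     lam (Gp a S z) = match z with
                      | inl (a', y) => if excluded_middle_informative (a' = a) then nu y S else 0
                      | inr _ => 0 end).
  { intro z. destruct z as [[a' y]|u].
    - destruct (excluded_middle_informative (a' = a)) as [e|e].
      + subst. assert (E : forall r, P y S r <-> Gp a S (inl (a, y)) r) by (intro r; unfold P, Gp; tauto).
        split; [eapply lmeas_ext; [exact E| auto]| rewrite <- (lam_ext _ _ E); reflexivity].
      + assert (E : forall r, False <-> Gp a S (inl (a', y)) r) by (intro r; unfold Gp; tauto).
        split; [eapply lmeas_ext; [exact E| apply Leb.lm_false]| rewrite <- (lam_ext _ _ E); apply lam_false'].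
    - assert (E : forall r, False <-> Gp a S (inr u) r) by (intro r; unfold Gp; tauto).
      split; [eapply lmeas_ext; [exact E| apply Leb.lm_false]| rewrite <- (lam_ext _ _ E); apply lam_false']. }
  destruct (Q_props (lst x) (alpha x) (Gp a S) (alpha_ge0 x) (fun z => proj1 (HG z))
              (fun z r h => proj1 h)) as [Qm Ql].
  split; [eapply lmeas_ext; [intro om; symmetry; apply P_prefix_eq| exact Qm]|].
  unfold nu at 1. rewrite (lam_ext _ _ (P_prefix_eq x a S)), Ql.
  rewrite (fsum_eq _ (extract a (lst x))).
  - rewrite <- lsum_extract. apply lsum_ext; intros z _. rewrite (proj2 (HG z)).
    destruct z as [[a' y]|u]; [|ring]. destruct (excluded_middle_informative (a' = a)); [subst; reflexivity| ring].
  - apply extract_supp. intros y h E; apply h; rewrite E; ring.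
Qed.

Lemma nu_single_nil x : lmeas (P x (wsingle nil)) /\ nu x (wsingle nil) = alpha x (inr tt).
Proof.
  set (G0 := fun (z : A * X + unit) (r : R) => 0 <= r < 1 /\ z = inr tt).
  assert (E : forall om, P x (wsingle nil) om <-> Q (lst x) (alpha x) G0 om).
  { intro om; unfold P, Q, G0, wsingle. change (pick (lst x) (alpha x) om) with (step x om). split.
    - intros [[h0 h1] hv]. rewrite F_step in hv.
      destruct (step_some x om (conj h0 h1)) as [z [r Hs]]. rewrite Hs in hv |- *.
      split; auto. split; [eapply step_r; eauto|].
      destruct z as [[a' y]|u]; [apply wcons_nil in hv; contradiction| destruct u; reflexivity].
    - intros [h0 h]. destruct (step x om) as [[z r]|] eqn:Hs; [|contradiction].
      destruct h as [hr h]. split; [split; auto; eapply step_lt; eauto|].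
      rewrite F_step, Hs. subst; reflexivity. }
  assert (HG : forall z, lmeas (G0 z) /\ lam (G0 z) = if excluded_middle_informative (z = inr tt) then 1 else 0).
  { intro z. destruct (excluded_middle_informative (z = inr tt)) as [e|e].
    - assert (E0 : forall r, (0 <= r /\ r < 1) <-> G0 z r) by (intro r; unfold G0; tauto).
      split; [eapply lmeas_ext; [exact E0| apply Leb.lm_Ico]|].
      rewrite <- (lam_ext _ _ E0). rewrite Leb.lam_Ico by lra. ring.
    - assert (E0 : forall r, False <-> G0 z r) by (intro r; unfold G0; tauto).
      split; [eapply lmeas_ext; [exact E0| apply Leb.lm_false]| rewrite <- (lam_ext _ _ E0); apply lam_false']. }
  destruct (Q_props (lst x) (alpha x) G0 (alpha_ge0 x) (fun z => proj1 (HG z))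
              (fun z r h => proj1 h)) as [Qm Ql].
  split; [eapply lmeas_ext; [intro om; symmetry; apply E| exact Qm]|].
  unfold nu. rewrite (lam_ext _ _ E), Ql.
  rewrite <- (fsum_eq (fun z => alpha x z * lam (G0 z))).
  - rewrite (fsum_eq _ [inr tt]).
    + rewrite lsum_cons, lsum_nil, (proj2 (HG _)).
      destruct (excluded_middle_informative (inr tt = inr tt)); [ring| congruence].
    + split; [constructor; [simpl; tauto| constructor]|].
      intros z h. rewrite (proj2 (HG z)) in h. destruct (excluded_middle_informative (z = inr tt)); [left; auto|].
      exfalso; apply h; ring.
  - destruct (lst_supp x) as [N S]. split; auto. intros z h; apply S. intro e; apply h; rewrite e; ring.
Qed.

Lemma nu_full x : lmeas (P x (@wfull A)) /\ nu x (@wfull A) = 1.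
Proof.
  assert (E : forall om, (0 <= om /\ om < 1) <-> P x (@wfull A) om) by (intro om; unfold P, wfull; tauto).
  split; [eapply lmeas_ext; [exact E| apply Leb.lm_Ico]|].
  unfold nu. rewrite <- (lam_ext _ _ E). rewrite Leb.lam_Ico by lra. ring.
Qed.

Lemma single_cons (a : A) s v : wsingle (a :: s) v <-> wprefix a (wsingle s) v.
Proof.
  unfold wsingle, wprefix; split.
  - intro h; exists (Fin s); split; auto.
  - intros [v' [h1 h2]]; subst; reflexivity.
Qed.
Lemma cyl_cons (a : A) s v : wcyl (a :: s) v <-> wprefix a (wcyl s) v.
Proof.
  unfold wcyl, wprefix; split.
  - intros [v' h]; exists (wapp s v'); split; eauto.
  - intros [v'' [[v' h1] h2]]; subst; exists v'; reflexivity.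
Qed.
Lemma cyl_nil (v : word A) : wcyl nil v <-> @wfull A v.
Proof. unfold wcyl, wfull; split; [auto| intros _; exists v; reflexivity]. Qed.

Lemma Pmeas S : measurable S -> forall x, lmeas (P x S).
Proof.
  intro H; induction H; intro x.
  - eapply lmeas_ext; [|apply Leb.lm_false]. intro om; unfold P, wempty; tauto.
  - revert x; induction s as [|a s IH]; intro x; [apply nu_single_nil|].
    eapply Pmeas_ext; [intro v; symmetry; apply single_cons|]. apply nu_prefix; auto.
  - revert x; induction s as [|a s IH]; intro x.
    + eapply Pmeas_ext; [intro v; symmetry; apply cyl_nil| apply nu_full].
    + eapply Pmeas_ext; [intro v; symmetry; apply cyl_cons|]. apply nu_prefix; auto.
  - eapply lmeas_ext; [|apply Leb.lm_and; [apply (Leb.lm_Ico 0 1)| apply Leb.lm_not; apply (IHmeasurable x)]].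
    intro om; unfold P, wcompl; tauto.
  - eapply lmeas_ext; [|apply Leb.lm_union; intro n; apply (H0 n x)].
    intro om; unfold P, wbigcup; split; [intros [n [h1 h2]]; split; eauto| intros [h1 [n h2]]; eauto].
Qed.

Lemma nu_ge0 x S : 0 <= nu x S.
Proof. apply lam_ge0'. Qed.

Lemma nu_sigma x (Fs : nat -> wset A) : (forall n, measurable (Fs n)) ->
  (forall i j v, i <> j -> Fs i v -> Fs j v -> False) ->
  infinite_sum (fun n => nu x (Fs n)) (nu x (wbigcup Fs)).
Proof.
  intros Hm Hd. unfold nu.
  rewrite (lam_ext (P x (wbigcup Fs)) (fun om => exists n, P x (Fs n) om)).
  - apply Leb.lam_sigma.
    + intro n; apply Pmeas; auto.
    + exists 0, 1; intros n om [h _]; lra.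
    + intros i j om nij [_ hi] [_ hj]; eapply Hd; eauto.
  - intro om; unfold P, wbigcup; split; [intros [h1 [n h2]]; eauto| intros [n [h1 h2]]; split; eauto].
Qed.

Lemma infsum_Un s l : infinite_sum s l <-> Un_cv (fun n => sum_f_R0 s n) l.
Proof. split; intro H; exact H. Qed.

Lemma infsum_ext s1 s2 l : (forall n, s1 n = s2 n) -> infinite_sum s1 l -> infinite_sum s2 l.
Proof. intros H; rewrite (functional_extensionality s1 s2 H); auto. Qed.

Lemma infsum_zero : infinite_sum (fun _ => 0) 0.
Proof.
  intros eps he; exists 0%nat; intros n _.
  assert (E : sum_f_R0 (fun _ => 0) n = 0) by (induction n; simpl; [reflexivity| rewrite IHn; ring]).
  rewrite E; unfold Rdist; rewrite Rminus_0_r, Rabs_R0; lra.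
Qed.

Lemma infsum_plus s1 s2 l1 l2 : infinite_sum s1 l1 -> infinite_sum s2 l2 ->
  infinite_sum (fun n => s1 n + s2 n) (l1 + l2).
Proof.
  rewrite !infsum_Un; intros h1 h2.
  assert (E : (fun n => sum_f_R0 (fun k => s1 k + s2 k) n) = (fun n => sum_f_R0 s1 n + sum_f_R0 s2 n))
    by (apply functional_extensionality; intro n; apply sum_plus).
  rewrite E; apply CV_plus; auto.
Qed.

Lemma infsum_scal c s l : infinite_sum s l -> infinite_sum (fun n => c * s n) (c * l).
Proof.
  rewrite !infsum_Un; intro h.
  assert (E : (fun n => sum_f_R0 (fun k => c * s k) n) = (fun n => (fun _ => c) n * sum_f_R0 s n)).
  { apply functional_extensionality; intro n. rewrite scal_sum. apply sum_eq; intros; ring. }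
  rewrite E; apply CV_mult; auto.
  intros eps he; exists 0%nat; intros; unfold Rdist; rewrite Rminus_diag, Rabs_R0; lra.
Qed.

Lemma infsum_lsum {Y} (l : list Y) (c : Y -> R) (g : Y -> nat -> R) (L : Y -> R) :
  (forall y, In y l -> infinite_sum (g y) (L y)) ->
  infinite_sum (fun n => lsum l (fun y => c y * g y n)) (lsum l (fun y => c y * L y)).
Proof.
  induction l as [|y l IH]; intro H.
  - apply infsum_zero.
  - rewrite lsum_cons. eapply infsum_ext; [|apply infsum_plus; [apply infsum_scal, H; left; auto| apply IH; intros; apply H; right; auto]].
    intro n; rewrite lsum_cons; reflexivity.
Qed.

Definition sem (u : X -> R) (S : wset A) : R := fsum (fun x => u x * nu x S).

Lemma sem_eq u lu S : fin_supp u lu -> sem u S = lsum lu (fun x => u x * nu x S).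
Proof.
  intros [N Hs]. apply fsum_eq. split; auto. intros x h; apply Hs. intro e; apply h; rewrite e; ring.
Qed.

Lemma sem_subprob u : isD u -> is_subprob (sem u).
Proof.
  intros [H01 [[lu Hlu] Hsum]].
  assert (u0 : forall x, 0 <= u x) by (intro x; apply H01).
  split; [|split; [|split]].
  - rewrite (sem_eq u lu) by auto. apply lsum_zero; intros x _.
    unfold nu; rewrite (lam_ext _ (fun _ => False)), lam_false'; [ring|].
    intro om; unfold P, wempty; tauto.
  - intros S _. rewrite (sem_eq u lu) by auto. apply lsum_nonneg; intros x _.
    apply Rmult_le_pos; auto; apply nu_ge0.
  - intros Fs Hm Hd. rewrite (sem_eq u lu) by auto.
    eapply infsum_ext; [intro n; symmetry; apply (sem_eq u lu); auto|].
    apply infsum_lsum; intros x _; apply nu_sigma; auto.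
  - rewrite (sem_eq u lu) by auto. rewrite (lsum_ext _ _ u).
    + rewrite <- (fsum_eq u lu); auto.
    + intros x _; rewrite (proj2 (nu_full x)); ring.
Qed.

Lemma lsum_scal_r {Y} (l : list Y) c f : lsum l f * c = lsum l (fun y => f y * c).
Proof. rewrite Rmult_comm, <- lsum_scal. apply lsum_ext; intros; ring. Qed.

Definition LY (a : A) (lu : list X) : list X :=
  nodup (fun y1 y2 => excluded_middle_informative (y1 = y2)) (flat_map (fun x => extract a (lst x)) lu).

Lemma LY_In a lu y : In y (LY a lu) <-> exists x, In x lu /\ In (inl (a, y)) (lst x).
Proof.
  unfold LY; rewrite nodup_In, in_flat_map. split; intros [x [h1 h2]]; exists x; split; auto;
    apply extract_In; auto.
Qed.
Lemma LY_NoDup a lu : NoDup (LY a lu).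
Proof. apply NoDup_nodup. Qed.

Lemma tau_eq u lu a y : fin_supp u lu -> tau alpha a u y = lsum lu (fun x => u x * alpha x (inl (a, y))).
Proof.
  intros [N Hs]. unfold tau. apply fsum_eq. split; auto. intros x h; apply Hs. intro e; apply h; rewrite e; ring.
Qed.

Lemma tau_supp u lu a : fin_supp u lu -> fin_supp (tau alpha a u) (LY a lu).
Proof.
  intro Hu. split; [apply LY_NoDup|]. intros y h. rewrite (tau_eq u lu) in h by auto.
  apply lsum_nz in h. destruct h as [x [hx h]]. apply LY_In. exists x; split; auto.
  apply (proj2 (lst_supp x)). intro e; apply h; rewrite e; ring.
Qed.

Lemma alpha_a_sum x a : fsum (fun y => alpha x (inl (a, y))) <= 1.
Proof.
  rewrite (fsum_eq _ (extract a (lst x))).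
  - rewrite <- lsum_extract. rewrite <- (lsum_alpha x). apply lsum_le; intros z _.
    destruct z as [[a' y]|u]; [|apply alpha_ge0].
    destruct (excluded_middle_informative (a' = a)); [subst; lra| apply alpha_ge0].
  - apply extract_supp; auto.
Qed.

Lemma alpha_a_LY x a lu : In x lu ->
  fsum (fun y => alpha x (inl (a, y))) = lsum (LY a lu) (fun y => alpha x (inl (a, y))).
Proof.
  intro hx. apply fsum_eq. split; [apply LY_NoDup|]. intros y h. apply LY_In. exists x; split; auto.
  apply (proj2 (lst_supp x)); auto.
Qed.

Lemma tau_isD u a : isD u -> isD (tau alpha a u).
Proof.
  intros [H01 [[lu Hlu] Hsum]].
  assert (u0 : forall x, 0 <= u x) by (intro x; apply H01).
  assert (Hlu1 : lsum lu u <= 1) by (rewrite <- (fsum_eq u lu); auto).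
  split; [|split].
  - intro y; rewrite (tau_eq u lu) by auto. split.
    + apply lsum_nonneg; intros; apply Rmult_le_pos; auto; apply alpha_ge0.
    + eapply Rle_trans; [|exact Hlu1]. apply lsum_le; intros x _.
      pose proof (alpha_le1 x (inl (a, y))). pose proof (u0 x). nra.
  - exists (LY a lu); apply tau_supp; auto.
  - rewrite (fsum_eq _ (LY a lu)) by (apply tau_supp; auto).
    rewrite (lsum_ext _ _ (fun y => lsum lu (fun x => u x * alpha x (inl (a, y))))) by (intros; apply tau_eq; auto).
    rewrite <- lsum_swap. eapply Rle_trans; [|exact Hlu1]. apply lsum_le; intros x hx.
    rewrite lsum_scal, <- alpha_a_LY by auto. pose proof (alpha_a_sum x a). pose proof (u0 x). nra.
Qed.

Lemma sem_prefix u a S : isD u -> measurable S -> sem u (wprefix a S) = sem (tau alpha a u) S.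
Proof.
  intros Hu HS. destruct Hu as [H01 [[lu Hlu] Hsum]].
  rewrite (sem_eq u lu) by auto. rewrite (sem_eq _ (LY a lu)) by (apply tau_supp; auto).
  rewrite (lsum_ext lu _ (fun x => lsum (LY a lu) (fun y => u x * (alpha x (inl (a, y)) * nu y S)))).
  - rewrite lsum_swap. apply lsum_ext; intros y _.
    rewrite (tau_eq u lu) by auto. rewrite lsum_scal_r. apply lsum_ext; intros; ring.
  - intros x hx. rewrite (proj2 (nu_prefix x a S (Pmeas S HS))). rewrite lsum_scal. f_equal.
    apply fsum_eq. split; [apply LY_NoDup|]. intros y h. apply LY_In. exists x; split; auto.
    apply (proj2 (lst_supp x)). intro e; apply h; rewrite e; ring.
Qed.

Lemma sem_morph : is_coalg_morphism alpha sem.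
Proof.
  intros u Hu. split; [apply sem_subprob; auto|]. split; [|split].
  - unfold sem, alpha1. f_equal. apply functional_extensionality; intro x.
    rewrite (proj2 (nu_full x)), (proj2 (proj2 (Halpha x))). reflexivity.
  - unfold sem, alphastar. f_equal. apply functional_extensionality; intro x.
    rewrite (proj2 (nu_single_nil x)). reflexivity.
  - intros a S HS; apply sem_prefix; auto.
Qed.

Lemma dirac_isD (x : X) : isD (dirac x).
Proof.
  assert (Hs : fin_supp (dirac x) [x]).
  { split; [constructor; [simpl; tauto| constructor]|]. intros y h. unfold dirac in h.
    destruct (excluded_middle_informative (y = x)); [left; auto| exfalso; apply h; reflexivity]. }
  split; [|split; [exists [x]; auto|]].
  - intro y; unfold dirac; destruct (excluded_middle_informative (y = x)); lra.
  - rewrite (fsum_eq _ [x]) by auto. rewrite lsum_cons, lsum_nil. unfold dirac.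
    destruct (excluded_middle_informative (x = x)); lra.
Qed.

Lemma sem_dirac (x : X) S : sem (dirac x) S = nu x S.
Proof.
  destruct (dirac_isD x) as [_ [[l Hl] _]].
  unfold sem; rewrite (fsum_eq _ [x]).
  - rewrite lsum_cons, lsum_nil. unfold dirac. destruct (excluded_middle_informative (x = x)); [ring| congruence].
  - split; [constructor; [simpl; tauto| constructor]|]. intros y h. unfold dirac in h.
    destruct (excluded_middle_informative (y = x)); [left; auto| exfalso; apply h; ring].
Qed.

Lemma sem_linear u S : sem u S = fsum (fun x => u x * sem (dirac x) S).
Proof. unfold sem at 1. f_equal. apply functional_extensionality; intro x. rewrite sem_dirac; reflexivity. Qed.

Lemma wset_ext (S T : wset A) : (forall v, S v <-> T v) -> S = T.
Proof. intro H; apply functional_extensionality; intro w; apply propositional_extensionality; auto. Qed.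

Lemma subprob_compl (m : wset A -> R) B : is_subprob m -> measurable B ->
  m (wcompl B) = m (@wfull A) - m B.
Proof.
  intros [m0 [_ [msig _]]] HS.
  set (Fs := fun n : nat => match n with 0%nat => B | 1%nat => wcompl B | _ => @wempty A end).
  assert (Hm : forall n, measurable (Fs n)) by (intros [|[|n]]; simpl; [exact HS| apply meas_compl; exact HS| apply meas_empty]).
  assert (Hd : forall i j v, i <> j -> Fs i v -> Fs j v -> False).
  { intros [|[|i]] [|[|j]] v nij; simpl; unfold wcompl, wempty; intros; first [tauto| apply nij; reflexivity]. }
  assert (HU : wbigcup Fs = @wfull A).
  { apply wset_ext; intro v; unfold wbigcup, wfull; split; [auto|intros _].
    destruct (classic (B v)); [exists 0%nat; auto| exists 1%nat; auto]. }
  pose proof (msig Fs Hm Hd) as H1. rewrite HU in H1.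
  assert (H2 : infinite_sum (fun n => m (Fs n)) (m B + m (wcompl B))).
  { intros eps he; exists 1%nat; intros n hn.
    assert (E : forall k, sum_f_R0 (fun n => m (Fs n)) (S k) = m B + m (wcompl B)).
    { induction k; [reflexivity|]. rewrite tech5, IHk. simpl Fs. rewrite m0; ring. }
    destruct n as [|k]; [lia|]. rewrite E. unfold Rdist; rewrite Rminus_diag, Rabs_R0; lra. }
  rewrite (uniqueness_sum _ _ _ H1 H2). ring.
Qed.

Definition Gen (S : wset A) : Prop :=
  S = @wempty A \/ (exists s, S = wsingle s) \/ (exists s, S = wcyl s).

Lemma Gen_inter_sc s t : Gen (fun v => wsingle s v /\ wcyl t v).
Proof.
  destruct (classic (exists r, s = t ++ r)) as [[r hr]|hn].
  - right; left; exists s. apply wset_ext; intro v; unfold wsingle, wcyl; split; [tauto|].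
    intro h; split; auto. exists (Fin r). rewrite wapp_fin, h, hr; reflexivity.
  - left. apply wset_ext; intro v; unfold wsingle, wcyl, wempty; split; [|tauto].
    intros [h1 [v' h2]]. subst. symmetry in h2. apply wapp_Fin in h2. destruct h2 as [r [_ hr]]. eauto.
Qed.

Lemma Gen_inter_cc s t : Gen (fun v => wcyl s v /\ wcyl t v).
Proof.
  destruct (classic (exists r, t = s ++ r)) as [[r hr]|hn].
  - right; right; exists t. apply wset_ext; intro v; unfold wcyl; split; [tauto|].
    intros [v2 h]; split; [|eauto]. exists (wapp r v2). rewrite h, hr, wapp_app; reflexivity.
  - destruct (classic (exists r, s = t ++ r)) as [[r hr]|hn2].
    + right; right; exists s. apply wset_ext; intro v; unfold wcyl; split; [tauto|].
      intros [v1 h]; split; [eauto|]. exists (wapp r v1). rewrite h, hr, wapp_app; reflexivity.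
    + left. apply wset_ext; intro v; unfold wcyl, wempty; split; [|tauto].
      intros [[v1 h1] [v2 h2]]. rewrite h1 in h2. apply wapp_eq in h2.
      destruct h2 as [[r [hr _]]|[r [hr _]]]; eauto.
Qed.

Lemma Gen_inter S T : Gen S -> Gen T -> Gen (fun v => S v /\ T v).
Proof.
  intros hS hT.
  assert (comm : forall S T : wset A, (fun v => S v /\ T v) = (fun v => T v /\ S v))
    by (intros; apply wset_ext; intro; tauto).
  assert (eml : forall T : wset A, Gen (fun v => @wempty A v /\ T v)).
  { intro T0; left; apply wset_ext; intro v; unfold wempty; tauto. }
  destruct hS as [->|[[s ->]|[s ->]]].
  - apply eml.
  - destruct hT as [->|[[t ->]|[t ->]]].
    + rewrite comm; apply eml.
    + destruct (classic (s = t)) as [e|e].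
      * subst; right; left; exists t; apply wset_ext; intro; tauto.
      * left; apply wset_ext; intro v; unfold wsingle, wempty; split; [|tauto]. intros [h1 h2]; congruence.
    + apply Gen_inter_sc.
  - destruct hT as [->|[[t ->]|[t ->]]].
    + rewrite comm; apply eml.
    + rewrite comm; apply Gen_inter_sc.
    + apply Gen_inter_cc.
Qed.

Lemma wfull_cyl : @wfull A = wcyl nil.
Proof. apply wset_ext; intro v; rewrite cyl_nil; tauto. Qed.

Lemma sem_unique sem' : is_coalg_morphism alpha sem' ->
  forall u, isD u -> forall S, measurable S -> sem' u S = sem u S.
Proof.
  intros Hm u Hu S HS.
  assert (agree : forall s u, isD u -> sem' u (wsingle s) = sem u (wsingle s) /\ sem' u (wcyl s) = sem u (wcyl s)).
  { intro s; induction s as [|a s IH]; intros u0 Hu0.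
    - destruct (Hm u0 Hu0) as [_ [h1 [h2 _]]]. destruct (sem_morph u0 Hu0) as [_ [k1 [k2 _]]].
      split; [rewrite h2, k2; reflexivity|]. rewrite <- wfull_cyl, h1, k1; reflexivity.
    - destruct (Hm u0 Hu0) as [_ [_ [_ h3]]]. destruct (sem_morph u0 Hu0) as [_ [_ [_ k3]]].
      destruct (IH _ (tau_isD u0 a Hu0)) as [i1 i2].
      rewrite (wset_ext (wsingle (a :: s)) (wprefix a (wsingle s))) by apply single_cons.
      rewrite (wset_ext (wcyl (a :: s)) (wprefix a (wcyl s))) by apply cyl_cons.
      rewrite !h3, !k3 by constructor. auto. }
  destruct (Hm u Hu) as [sp' [f1 _]]. destruct (sem_morph u Hu) as [sp [g1 _]].
  assert (HT : measurable (@wfull A)) by (rewrite wfull_cyl; constructor).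
  refine (proj2 (Leb.pi_lambda (word A) Gen (fun S => measurable S /\ sem' u S = sem u S) _ _ _ _ _ S _)).
  - apply Gen_inter.
  - split; [exact HT|]. change (sem' u (@wfull A) = sem u (@wfull A)). rewrite f1, g1; reflexivity.
  - intros B [hB eB]. split; [exact (meas_compl hB)|].
    change (sem' u (wcompl B) = sem u (wcompl B)).
    rewrite (subprob_compl _ _ sp' hB), (subprob_compl _ _ sp hB), eB.
    change (sem' u (@wfull A) - sem u B = sem u (@wfull A) - sem u B). rewrite f1, g1; reflexivity.
  - intros Fs Hd HF. split; [exact (meas_bigcup Fs (fun n => proj1 (HF n)))|].
    change (sem' u (wbigcup Fs) = sem u (wbigcup Fs)).
    destruct sp' as [_ [_ [s' _]]]. destruct sp as [_ [_ [s0 _]]].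
    apply (uniqueness_sum (fun n => sem u (Fs n))).
    + eapply infsum_ext; [intro n; apply (proj2 (HF n))| apply s'; auto; intro n; apply (proj1 (HF n))].
    + apply s0; auto; intro n; apply (proj1 (HF n)).
  - intros B [->|[[s ->]|[s ->]]].
    + split; [constructor|]. rewrite (proj1 sp'), (proj1 sp); reflexivity.
    + split; [constructor| apply agree; auto].
    + split; [constructor| apply agree; auto].
  - intros Pp hG hC hU. clear - HS hG hC hU. induction HS.
    + apply hG; left; reflexivity.
    + apply hG; right; left; eauto.
    + apply hG; right; right; eauto.
    + apply hC; auto.
    + apply hU; auto.
Qed.

End Proc.

Theorem mainTheorem14 (A X : Type) (HA : exists l : list A, forall a, In a l)
  (alpha : X -> (A * X + unit) -> R) (Halpha : forall x, isP (alpha x)) :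
  exists sem : (X -> R) -> wset A -> R,
    is_coalg_morphism alpha sem /\
    (forall sem' : (X -> R) -> wset A -> R,
        is_coalg_morphism alpha sem' ->
        forall u, isD u -> forall S, measurable S -> sem' u S = sem u S) /\
    (forall u, isD u -> forall S, measurable S ->
        sem u S = fsum (fun x => u x * sem (dirac x) S)).
Proof.
  exists (sem A X alpha Halpha). split; [apply sem_morph|]. split.
  - intros sem' Hm u Hu S HS. apply (sem_unique A X alpha Halpha sem' Hm u Hu S HS).
  - intros u _ S _. apply sem_linear.
Qed.
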